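(* In the standing setup, if $g=B^{\rm T}f_0$ is associated to $f_0$ via $B=\alpha I+\beta A+\gamma A^2$ with $B^2=I$, then $\det(I-\varepsilon g'(x))=\det(I-\varepsilon f_0'(x))$ for all $x\in\mathbb R^6$ and all $\varepsilon\in\mathbb R$.
   Context: Standing setup: $J=\begin{pmatrix}0&I_3\\-I_3&0\end{pmatrix}$ ($6\times6$). $A$ is a fixed real $6\times 6$ skew-Hamiltonian matrix, i.e. $A^{\rm T}J=JA$. $H_0$ is a homogeneous cubic polynomial on $\mathbb R^6$ with $A\nabla^2H_0(x)=\nabla^2H_0(x)A^{\rm T}$ for all $x$ ($\nabla^2$ = Hesse matrix), and $H_1,H_2$ are homogeneous cubic polynomials with $\nabla H_1=A\nabla H_0$, $\nabla H_2=A\nabla H_1$. Set $f_i=J\nabla H_i$; primes denote Jacobi matrices. Associated vector field: if $B=\alpha I+\beta A+\gamma A^2$ satisfies $B^2=I$, then $g(x)=B^{\rm T}f_0(x)$ is called associated to $f_0$. *)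

(* Defs.v *)
From HB Require Import structures.
From mathcomp Require Import all_boot all_order all_algebra.
Set Implicit Arguments. Unset Strict Implicit. Unset Printing Implicit Defensive.
Import Order.TTheory GRing.Theory Num.Theory.
Local Open Scope ring_scope.

Definition Jmat (R : pzRingType) : 'M[R]_6 :=
  block_mx (0 : 'M[R]_(3,3)) 1%:M (- 1%:M) 0.

(* A homogeneous cubic polynomial on R^6, given by its (not necessarily
   symmetric) coefficient tensor: H(x) = sum_{i,j,k} c i j k x_i x_j x_k.
   Every homogeneous cubic is of this form. *)
Definition cubic (R : pzRingType) := 'I_6 -> 'I_6 -> 'I_6 -> R.

Definition evalC (R : pzRingType) (c : cubic R) (x : 'cV[R]_6) : R :=
  \sum_(i < 6) \sum_(j < 6) \sum_(k < 6) c i j k * x i 0 * x j 0 * x k 0.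

Definition quadf (R : pzRingType) := 'I_6 -> 'I_6 -> 'I_6 -> R.

Definition evalQ (R : pzRingType) (q : quadf R) (x : 'cV[R]_6) : 'cV[R]_6 :=
  \col_(i < 6) \sum_(j < 6) \sum_(k < 6) q i j k * x j 0 * x k 0.

(* Gradient of a cubic (exact formal partial derivatives):
   d/dx_l (sum c a b d x_a x_b x_d) = sum_{j,k} (c l j k + c j l k + c j k l) x_j x_k *)
Definition gradC (R : pzRingType) (c : cubic R) : quadf R :=
  fun l j k => c l j k + c j l k + c j k l.

(* Jacobi matrix of a quadratic vector field (exact formal derivative):
   d f_i / d x_l = sum_k (q i l k + q i k l) x_k *)
Definition jacQ (R : pzRingType) (q : quadf R) (x : 'cV[R]_6) : 'M[R]_6 :=
  \matrix_(i < 6, l < 6) \sum_(k < 6) (q i l k + q i k l) * x k 0.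

Definition hessC (R : pzRingType) (c : cubic R) (x : 'cV[R]_6) : 'M[R]_6 :=
  jacQ (gradC c) x.

Definition mulQ (R : pzRingType) (M : 'M[R]_6) (q : quadf R) : quadf R :=
  fun i j k => \sum_(m < 6) M i m * q m j k.



Definition hamf (R : pzRingType) (H : cubic R) : quadf R := mulQ (Jmat R) (gradC H).

(* Main.v *)
Require Import Defs.
From HB Require Import structures.
From mathcomp Require Import all_boot all_order all_algebra.
From mathcomp Require Import ring.
Import Order.TTheory GRing.Theory Num.Theory.
Local Open Scope ring_scope.

Lemma JT (R : comNzRingType) : (Jmat R)^T = - Jmat R.
Proof.
pose J0 := (block_mx (0 : 'M[R]_(3,3)) 1%:M (- 1%:M) 0).
have -> : (Jmat R)^T = J0^T by [].
have -> : - Jmat R = - J0 by [].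
rewrite /J0.
rewrite tr_block_mx !trmx0 raddfN /= !tr_scalar_mx.
by rewrite opp_block_mx !oppr0 opprK.
Qed.

Lemma JJ (R : comNzRingType) : Jmat R *m Jmat R = - (1%:M).
Proof.
have -> : Jmat R *m Jmat R = (block_mx (0 : 'M[R]_(3,3)) 1%:M (- 1%:M) 0) *m (block_mx (0 : 'M[R]_(3,3)) 1%:M (- 1%:M) 0) by [].
rewrite mulmx_block !mulmx0 !mul0mx !mulmx1 !addr0 !add0r.
have -> : (- (1%:M) : 'M[R]_6) = - (1%:M : 'M[R]_(3+3)) by [].
by rewrite scalar_mx_block opp_block_mx oppr0 mul1mx.
Qed.

Lemma jacQ_mulQ (R : comNzRingType) (M : 'M[R]_6) q x :
  jacQ (mulQ M q) x = M *m jacQ q x.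
Proof.
apply/matrixP=> i l; rewrite !mxE.
under eq_bigr => k _ do rewrite /mulQ -big_split /= big_distrl /=.
rewrite exchange_big /=; apply: eq_bigr => m _; rewrite mxE big_distrr /=.
by apply: eq_bigr => k _; rewrite -mulrDr mulrA.
Qed.

Lemma hess_sym (R : comNzRingType) (c : cubic R) x : (hessC c x)^T = hessC c x.
Proof.
apply/matrixP=> i l; rewrite !mxE; apply: eq_bigr => k _.
rewrite /gradC; congr (_ * _).
rewrite !addrA.
ring.
Qed.
Section K.
Variables (R : fieldType) (n : nat) (J S C : 'M[R]_n).
Hypotheses (hJJ : J *m J = - (1%:M)) (hJT : J^T = - J) (hS : S^T = S)
  (hC2 : C *m C = 1%:M) (hCM : C *m (J *m S) = (J *m S) *m C)
  (hCJ : C^T *m J = J *m C) (h2 : (2:R) != 0).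

Let M := J *m S.
Let K := 1%:M - C.
Let Q := 2^-1 *: K.
Let P := 1%:M - Q.

Lemma hMT : M^T *m J = - (J *m M).
Proof.
rewrite /M trmx_mul hS hJT mulmxN mulNmx -mulmxA hJJ.
by rewrite mulmxN mulmx1 mulmxA hJJ mulNmx mul1mx opprK.
Qed.

Lemma hKK : K *m K = K + K.
Proof.
rewrite /K !(mulmxBl, mulmxBr) !(mul1mx, mulmx1) hC2.
by rewrite opprB.
Qed.

Lemma hQQ : Q *m Q = Q.
Proof.
rewrite /Q -scalemxAl -scalemxAr hKK scalerA -mulr2n -scaler_nat scalerA.
congr (_ *: _); by rewrite -mulrA mulVf // mulr1.
Qed.

Lemma hQM : Q *m M = M *m Q.
Proof.
by rewrite /Q -scalemxAl -scalemxAr /K mulmxBl mulmxBr mul1mx mulmx1 hCM.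
Qed.

Lemma hPQ : P *m Q = 0.
Proof. by rewrite /P mulmxBl mul1mx hQQ subrr. Qed.

Lemma hCPQ : C = P - Q.
Proof.
have e2 : (2:R)^-1 + 2^-1 = 1 by field.
rewrite /P /Q -addrA -opprD -scalerDl e2.
by rewrite scale1r /K opprB addrC subrK.
Qed.

Lemma hPQ1 : P + Q = 1%:M.
Proof. by rewrite /P subrK. Qed.

Lemma hQTJ : Q^T *m J = J *m Q.
Proof.
rewrite /Q /K linearZ /= -scalemxAl -scalemxAr; congr (_ *: _).
by rewrite linearB /= tr_scalar_mx mulmxBl mulmxBr mul1mx mulmx1 hCJ.
Qed.
End K.

Section K2.
Variables (R : fieldType) (n : nat) (J M P Q : 'M[R]_n).
Hypotheses (hJJ : J *m J = - (1%:M)) (hMT : M^T *m J = - (J *m M))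
  (hQM : Q *m M = M *m Q) (hPQ : P *m Q = 0) (hPQ1 : P + Q = 1%:M)
  (hQTJ : Q^T *m J = J *m Q).

Lemma hPMQM : (P *m M) *m (Q *m M) = 0.
Proof.
by rewrite mulmxA -(mulmxA P) -hQM (mulmxA P) hPQ !mul0mx.
Qed.

Lemma fact1 e : 1%:M - e *: ((P - Q) *m M) = (1%:M - e *: (P *m M)) *m (1%:M + e *: (Q *m M)).
Proof.
rewrite mulmxDr mulmx1 !mulmxBl mul1mx -scalemxAl -scalemxAr hPMQM !scaler0 subr0.
by rewrite scalerBr opprB addrA addrAC.
Qed.

Lemma fact2 e : 1%:M - e *: M = (1%:M - e *: (P *m M)) *m (1%:M - e *: (Q *m M)).
Proof.
rewrite mulmxBr mulmx1 !mulmxBl mul1mx -scalemxAl -scalemxAr hPMQM !scaler0 subr0.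
rewrite -{1}(mul1mx M) -hPQ1 mulmxDl scalerDr opprD addrA.
done.
Qed.

Lemma hT e : (1%:M - e *: (Q *m M))^T *m J = J *m (1%:M + e *: (Q *m M)).
Proof.
rewrite linearB /= tr_scalar_mx linearZ /= trmx_mul mulmxBl mul1mx -scalemxAl.
rewrite -mulmxA hQTJ mulmxA hMT mulNmx mulmxDr mulmx1 -scalemxAr hQM mulmxA.
by rewrite scalerN opprK.
Qed.

Lemma detJ : \det J != 0.
Proof.
apply/negP => /eqP h.
have := congr1 determinant hJJ; rewrite det_mulmx h mul0r.
have -> : - (1%:M : 'M[R]_n) = (-1)%:M by rewrite raddfN.
rewrite det_scalar => /esym /eqP; by rewrite expf_eq0 oppr_eq0 oner_eq0 andbF.
Qed.

Lemma fact3 e : \det (1%:M + e *: (Q *m M)) = \det (1%:M - e *: (Q *m M)).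
Proof.
have := congr1 determinant (hT e); rewrite !det_mulmx det_tr mulrC => /(mulfI detJ) -> //.
Qed.

Lemma key e : \det (1%:M - e *: ((P - Q) *m M)) = \det (1%:M - e *: M).
Proof. by rewrite fact1 fact2 !det_mulmx fact3. Qed.
End K2.

Lemma poly_comm (R : comNzRingType) (X Y Z : 'M[R]_6) a b c :
  X *m Z = Z *m Y ->
  (a%:M + b *: X + c *: (X *m X)) *m Z = Z *m (a%:M + b *: Y + c *: (Y *m Y)).
Proof.
move=> h; rewrite !mulmxDl !mulmxDr -!scalemxAl -!scalemxAr.
by rewrite mul_scalar_mx mul_mx_scalar -mulmxA h !mulmxA h.
Qed.

Lemma swapJ (R : comNzRingType) (X Y : 'M[R]_6) :
  X *m Jmat R = Jmat R *m Y -> Y *m Jmat R = Jmat R *m X.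
Proof.
move=> h.
have := congr1 (fun T => Jmat R *m T *m Jmat R) h => /=.
rewrite !mulmxA JJ -!mulmxA JJ mulmxN mulmx1 mulNmx mul1mx mulmxN => /oppr_inj.
by move=> ->.
Qed.

Theorem mainTheorem5 (R : realFieldType) (A : 'M[R]_6) (H0 H1 H2 : cubic R)
  (alpha beta gamma : R)
  (hA : A^T *m Jmat R = Jmat R *m A)
  (hH0 : forall x : 'cV[R]_6, A *m hessC H0 x = hessC H0 x *m A^T)
  (hH1 : forall x : 'cV[R]_6, evalQ (gradC H1) x = A *m evalQ (gradC H0) x)
  (hH2 : forall x : 'cV[R]_6, evalQ (gradC H2) x = A *m evalQ (gradC H1) x)
  (hB : (alpha%:M + beta *: A + gamma *: (A *m A)) *m
        (alpha%:M + beta *: A + gamma *: (A *m A)) = 1%:M) :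
  let B := alpha%:M + beta *: A + gamma *: (A *m A) in
  let g := mulQ B^T (hamf H0) in
  forall (x : 'cV[R]_6) (eps : R),
    \det (1%:M - eps *: jacQ g x) = \det (1%:M - eps *: jacQ (hamf H0) x).
Proof.
move=> B g x eps.
set J := Jmat R.
set S := hessC H0 x.
have trB : B^T = alpha%:M + beta *: A^T + gamma *: (A^T *m A^T).
  by rewrite /B !linearD /= !linearZ /= tr_scalar_mx trmx_mul.
have hBtJ : B^T *m J = J *m B by rewrite trB; apply: poly_comm.
have hBJ : B *m J = J *m B^T by apply: swapJ.
have hBS : B *m S = S *m B^T by rewrite trB; apply: poly_comm; apply: hH0.
have hC2 : B^T *m B^T = 1%:M by rewrite -trmx_mul hB tr_scalar_mx.
have hCM : B^T *m (J *m S) = (J *m S) *m B^T.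
  by rewrite mulmxA hBtJ -mulmxA -hBS mulmxA.
have hCJ : B^T^T *m J = J *m B^T by rewrite trmxK.
have h2 : (2:R) != 0 by rewrite pnatr_eq0.
have hjg : jacQ g x = B^T *m (J *m S) by rewrite /g !jacQ_mulQ.
have hjf : jacQ (hamf H0) x = J *m S by rewrite /hamf jacQ_mulQ.
rewrite hjg hjf.
rewrite [in LHS](hCPQ _ _ B^T h2).
apply: (key _ _ _ _ _ _ (JJ R)).
- exact: (hMT _ _ _ _ (JJ R) (JT R) (hess_sym _ H0 x)).
- exact: (hQM _ _ _ _ _ hCM).
- exact: (hPQ _ _ _ hC2 h2).
- exact: (hPQ1 _ _ _).
- exact: (hQTJ _ _ _ _ hCJ).
Qed.
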